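(* Let $\underline{X}$ be an observation from a distribution $P_{(\theta,\underline{\eta})}$ indexed by $(\theta,\underline{\eta})$ in a parameter space $H$, with real parameter of interest $\theta$ ranging over $[A,B]$ (possibly $A=-\infty$ or $B=+\infty$), and fix $\alpha\in[0,1]$. For an upper one-sided confidence interval $C(\underline{X})=[A,U(\underline{X})]$, define its modification $C^M$ by $$h(\underline{x},\theta_0)=\sup_{(\theta,\underline{\eta})\in H,\ \theta\ge\theta_0}P_{(\theta,\underline{\eta})}\big(U(\underline{X})\le U(\underline{x})\big),\qquad C^M(\underline{x})=\overline{\{\theta_0: h(\underline{x},\theta_0)>\alpha\}}$$ (this is the h-function of the test statistic $U(\underline{x})-\theta_0$ for $H_0:\theta\ge\theta_0$). Let $C_u(\underline{X})=[A,U_u(\underline{X})]$ be an upper one-sided confidence interval of any level, let $C_u^{M1}=C_u^M$, $C_u^{M(k+1)}=(C_u^{Mk})^M$, and $C_u^{M\infty}=\bigcap_{k\ge1}C_u^{Mk}$. Then: (i) $C_u^M(\underline{X})$ is of level $1-\alpha$, i.e. $\inf_{(\theta,\underline{\eta})\in H}P_{(\theta,\underline{\eta})}(\theta\in C_u^M(\underline{X}))\ge1-\alpha$; (ii) $C_u^{M\infty}(\underline{X})=C_u^M(\underline{X})$; (iii) writing $C_u^M(\underline{X})=[A,U_u^M(\underline{X})]$, $C_u^M$ is the smallest interval in the class $\mathcal{C}_u$ of all $1-\alpha$ exact upper one-sided intervals $C(\underline{X})=[A,U(\underline{X})]$ such that $U(\underline{x}')\le U(\underline{x})$ whenever $U_u(\underline{x}')\le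 U_u(\underline{x})$, for all $\underline{x}',\underline{x}$; i.e. for any $C=[A,U]\in\mathcal{C}_u$, $U_u^M(\underline{X})\le U(\underline{X})$.
   Context: For a set $A'$ of parameter values, $\overline{A'}$ denotes the smallest closed simply connected set (closed interval) containing $A'$. An interval $C(\underline{X})$ for $\theta$ is ''$1-\alpha$ exact'' if $\inf_{(\theta,\underline{\eta})\in H}P_{(\theta,\underline{\eta})}(\theta\in C(\underline{X}))\ge1-\alpha$. *)

(* Defs.v *)
From HB Require Import structures.
From mathcomp Require Import all_boot all_order all_algebra.
From mathcomp Require Import all_classical all_reals all_analysis.
From mathcomp Require Import measurable_realfun.
Set Implicit Arguments. Unset Strict Implicit. Unset Printing Implicit Defensive.
Import Order.TTheory GRing.Theory Num.Theory.
Import numFieldNormedType.Exports.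
Local Open Scope classical_set_scope.
Local Open Scope ring_scope.

Section Modification.
Context (d : measure_display) (T : measurableType d) (R : realType)
  (Par : Type) (H : set Par) (theta : Par -> R) (P : Par -> probability T R)
  (A B : \bar R) (alpha : R).

Definition upper_int (U : T -> \bar R) (x : T) : set R :=
  [set t : R | (A <= t%:E)%E /\ (t%:E <= U x)%E].

Definition hfun (U : T -> \bar R) (x : T) (t0 : R) : \bar R :=
  ereal_sup [set P p [set y | (U y <= U x)%E] | p in [set p | H p /\ t0 <= theta p]].

Definition hullc (S : set R) : set R :=
  @closure R^o [set t : R | exists a b, S a /\ S b /\ a <= t <= b].

Definition modif (U : T -> \bar R) (x : T) : set R :=
  hullc [set t0 : R | (A <= t0%:E)%E /\ (t0%:E <= B)%E /\ (alpha%:E < hfun U x t0)%E].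

(* upper endpoint U^M of C^M = [A, U^M] (-oo if C^M(x) is empty) *)
Definition modif_ub (U : T -> \bar R) (x : T) : \bar R :=
  ereal_sup [set t%:E | t in modif U x].

Fixpoint modif_iter (U : T -> \bar R) (k : nat) : T -> \bar R :=
  match k with
  | O => U
  | S k' => modif_ub (modif_iter U k')
  end.

Definition exact_upper (U : T -> \bar R) : Prop :=
  ((1 - alpha)%:E <= ereal_inf [set P p [set x | upper_int U x (theta p)] | p in H])%E.

Definition class_u (Uu U : T -> \bar R) : Prop :=
  measurable_fun setT U /\ exact_upper U /\
  (forall x' x, (Uu x' <= Uu x)%E -> (U x' <= U x)%E).

End Modification.

(* Main.v *)
Require Import Defs.
From HB Require Import structures.
From mathcomp Require Import all_boot all_order all_algebra.
From mathcomp Require Import all_classical all_reals all_analysis.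
From mathcomp Require Import measurable_realfun.
From mathcomp Require Import lra.
Import Order.TTheory GRing.Theory Num.Theory.
Import numFieldNormedType.Exports.
Local Open Scope classical_set_scope.
Local Open Scope ring_scope.

Section Aux.
Context (d : measure_display) (T : measurableType d) (R : realType)
  (Par : Type) (H : set Par) (theta : Par -> R) (P : Par -> probability T R)
  (A B : \bar R) (alpha : R) (Uu : T -> \bar R) (mUu : measurable_fun setT Uu).
Local Open Scope ereal_scope.

Definition down (S : set T) := forall y y', S y -> Uu y' <= Uu y -> S y'.
Definition up (S : set T) := forall y y', S y -> Uu y <= Uu y' -> S y'.
Definition resp (U : T -> \bar R) := forall x' x, Uu x' <= Uu x -> U x' <= U x.

Lemma down_meas S : down S -> measurable S.
Proof.
move=> dS; set c := ereal_sup (Uu @` S).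
have ub z : S z -> Uu z <= c by move=> Sz; apply: ereal_sup_ubound; exists z.
have [[y Sy Uyc]|nat] := pselect (exists2 y, S y & Uu y = c).
- have -> : S = [set x | Uu x <= c].
    apply/seteqP; split => z /=; first exact: ub.
    by rewrite -Uyc => h; exact: dS Sy h.
  rewrite -[X in measurable X]setTI; exact: emeasurable_fun_infty_c.
- have -> : S = [set x | Uu x < c].
    apply/seteqP; split => z /=.
    + move=> Sz; rewrite lt_neqAle ub // andbT; apply/eqP => e; apply: nat.
      by exists z.
    + by move=> /ereal_sup_gt [_ [y Sy <-] lt]; exact: dS Sy (ltW lt).
  rewrite -[X in measurable X]setTI; exact: emeasurable_fun_infty_o.
Qed.

Lemma up_meas S : up S -> measurable S.
Proof.
move=> uS; rewrite -[S]setCK; apply: measurableC; apply: down_meas.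
by move=> y y' nSy le Sy'; apply: nSy; exact: uS Sy' le.
Qed.

Lemma resp_down U x : resp U -> down [set y | U y <= U x].
Proof. by move=> rU y y' /= h le; exact: le_trans (rU _ _ le) h. Qed.

Lemma hfun_mono U1 U2 x1 x2 t : resp U1 -> resp U2 ->
  [set y | U1 y <= U1 x1] `<=` [set y | U2 y <= U2 x2] ->
  hfun H theta P U1 x1 t <= hfun H theta P U2 x2 t.
Proof.
move=> r1 r2 sub; apply: ge_ereal_sup => _ [p [Hp tp] <-].
apply: (@le_trans _ _ (P p [set y | U2 y <= U2 x2])).
  apply: le_measure => //; rewrite inE; apply: down_meas; exact: resp_down.
by apply: ereal_sup_ubound; exists p.
Qed.

Lemma hullc_mono (S1 S2 : set R) : S1 `<=` S2 -> hullc S1 `<=` hullc S2.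
Proof.
move=> sub; apply: closureS => t [a [b [Sa [Sb h]]]].
by exists a, b; split; [exact: sub|split; [exact: sub|]].
Qed.

Lemma sub_hullc (S : set R) : S `<=` hullc S.
Proof.
move=> t St; apply: subset_closure; exists t, t; split => //; split => //.
by rewrite lexx.
Qed.

Lemma hullc_le (S : set R) (e : \bar R) : S `<=` [set t | t%:E <= e] ->
  hullc S `<=` [set t | t%:E <= e].
Proof.
move=> sub.
have K : closed [set t : R | t%:E <= e].
  case: e {sub} => [r| |].
  - by under eq_set do rewrite lee_fin; exact: closed_le.
  - by rewrite (_ : [set _ | _] = setT) ?predeqE //; move=> t; split => // _ /=; exact: leey.
  - rewrite (_ : [set _ | _] = set0) ?predeqE; first exact: closed0.
    by move=> t; split => //=; rewrite leeNy_eq.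
have hs : [set t : R | exists a b, S a /\ S b /\ (a <= t <= b)%R] `<=` [set t | t%:E <= e].
  move=> t [a [b [_ [Sb /andP[_ tb]]]]] /=; apply: le_trans (sub _ Sb).
  by rewrite lee_fin.
have KE := (closure_id _).1 K.
move=> t ht; suff : closure [set t : R | t%:E <= e] t by rewrite -KE.
exact: closureS hs _ ht.
Qed.


Lemma resp_refl : resp Uu. Proof. by move=> x' x. Qed.

Lemma modif_mono U1 U2 x1 x2 :
  (forall t, hfun H theta P U1 x1 t <= hfun H theta P U2 x2 t) ->
  modif H theta P A B alpha U1 x1 `<=` modif H theta P A B alpha U2 x2.
Proof.
move=> h; apply: hullc_mono => t [At [tB lt]]; split => //; split => //.
exact: lt_le_trans lt (h t).
Qed.

Lemma modif_ub_resp U : resp U -> resp (modif_ub H theta P A B alpha U).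
Proof.
move=> rU x' x le; apply: ereal_sup_le => _ [t mt <-]; exists t => //.
apply: modif_mono mt => t0; apply: hfun_mono => // y /= h.
exact: le_trans h (rU _ _ le).
Qed.

Lemma resp_iter k : resp (modif_iter H theta P A B alpha Uu k).
Proof. elim: k => [|k IH] /=; [exact: resp_refl|exact: modif_ub_resp]. Qed.

Lemma thresholds (c : \bar R) : c != -oo -> exists u : nat -> \bar R,
  [/\ forall n, u n < c, forall n m, (n <= m)%N -> u n <= u m &
      forall e, e < c -> exists n, e <= u n].
Proof.
case: c => [r| |] // _.
- exists (fun n => (r - n.+1%:R^-1)%:E); split.
  + by move=> n; rewrite lte_fin gtrBl invr_gt0.
  + move=> n m nm; rewrite lee_fin lerB // lef_pV2 ?posrE ?ltr0n // ler_nat.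
    by [].
  + case => [s| |] //; last by move=> _; exists 0%N; exact: leNye.
    rewrite lte_fin => sr; exists (Num.bound ((r - s)^-1)); rewrite lee_fin.
    set N := Num.bound _.
    have rs0 : (0 < r - s)%R by rewrite subr_gt0.
    have i0 : (0 < (r - s)^-1)%R by rewrite invr_gt0.
    have h1 := archi_boundP (ltW i0).
    have h2 : ((r - s)^-1 < N.+1%:R)%R by apply: lt_le_trans h1 _; rewrite ler_nat.
    have h3 : (N.+1%:R^-1 < r - s)%R.
      by rewrite -(invrK (r - s)%R) ltf_pV2 ?posrE ?invr_gt0 ?ltr0n.
    by rewrite lerBrDl -lerBrDr; exact: ltW h3.
- exists (fun n => n%:R%:E); split.
  + by move=> n; exact: ltry.
  + by move=> n m nm; rewrite lee_fin ler_nat.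
  + case => [s| |] //; last by move=> _; exists 0%N; exact: leNye.
    move=> _; exists (Num.bound `|s|); rewrite lee_fin.
    apply: le_trans (ler_norm s) (ltW (archi_boundP _)); exact: normr_ge0.
Qed.

Lemma prob_real (mu : probability T R) S : measurable S ->
  exists r : R, mu S = r%:E /\ (0 <= r <= 1)%R.
Proof.
move=> mS; have h0 : 0 <= mu S := measure_ge0 mu S.
have h1 : mu S <= 1 := probability_le1 mu mS.
move: h0 h1; case: (mu S) => [r h0 h1|//|//].
by exists r; split => //; apply/andP; split; rewrite -lee_fin.
Qed.

Lemma core (mu : probability T R) (D : set T) : (0 <= alpha)%R -> down D ->
  (forall y, D y -> mu [set z | Uu z <= Uu y] <= alpha%:E) -> mu D <= alpha%:E.
Proof.
move=> a0 dD hD; set c := ereal_sup (Uu @` D).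
have ub z : D z -> Uu z <= c by move=> Dz; apply: ereal_sup_ubound; exists z.
have mG y : measurable [set z | Uu z <= Uu y].
  by apply: down_meas; exact: resp_down resp_refl.
have [[y Dy Uyc]|nat] := pselect (exists2 y, D y & Uu y = c).
  apply: le_trans (hD _ Dy); apply: le_measure; rewrite ?inE //.
    exact: down_meas.
  by move=> z Dz /=; rewrite Uyc; exact: ub.
have DE : D = [set x | Uu x < c].
  apply/seteqP; split => z /=.
  + move=> Dz; rewrite lt_neqAle ub // andbT; apply/eqP => e; apply: nat.
    by exists z.
  + by move=> /ereal_sup_gt [_ [y Dy <-] lt]; exact: dD Dy (ltW lt).
have [cNy|cNy] := eqVneq c -oo.
  have -> : D = set0.
    by rewrite DE cNy; apply/seteqP; split => z //=; rewrite ltNge leNye.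
  by rewrite measure0 lee_fin.
have [u [hu1 hu2 hu3]] := @thresholds c cNy.
pose Bn n := [set x | Uu x <= u n].
have mB n : measurable (Bn n).
  by apply: down_meas => y y' /= h le; exact: le_trans le h.
have DB : D = \bigcup_n Bn n.
  apply/seteqP; split => z.
  - by rewrite DE /= => /hu3 [n h]; exists n.
  - by move=> [n _ /= h]; rewrite DE /=; exact: le_lt_trans h (hu1 n).
have nd : nondecreasing_seq Bn.
  by move=> n m nm; apply/subsetPset => z /= h; exact: le_trans h (hu2 _ _ nm).
have hB n : mu (Bn n) <= alpha%:E.
  have := hu1 n; rewrite {1}/c => /ereal_sup_gt [_ [y Dy <-] lt].
  apply: le_trans (hD _ Dy); apply: le_measure; rewrite ?inE //.
  by move=> z /= h; exact: le_trans h (ltW lt).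
have mU : measurable (\bigcup_n Bn n) by rewrite -DB; exact: down_meas.
have cv := @nondecreasing_cvg_mu _ _ _ mu _ mB mU nd.
rewrite DB -(cvg_lim _ cv) //; apply: lime_le.
  by apply/cvg_ex; eexists; exact: cv.
exact: nearW.
Qed.

Lemma S0_up p : up [set x | modif H theta P A B alpha Uu x (theta p)].
Proof.
move=> y y' /= h le; apply: modif_mono h => t.
apply: hfun_mono; [exact: resp_refl|exact: resp_refl|].
by move=> z /= h'; exact: le_trans h' le.
Qed.

Lemma cover p : (0 <= alpha)%R ->
  (forall p, H p -> A <= (theta p)%:E /\ (theta p)%:E <= B) -> H p ->
  (1 - alpha)%:E <= P p [set x | modif H theta P A B alpha Uu x (theta p)].
Proof.
move=> a0 hAB Hp.
set D := [set x | P p [set z | Uu z <= Uu x] <= alpha%:E].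
have mG y : measurable [set z | Uu z <= Uu y].
  by apply: down_meas; exact: resp_down resp_refl.
have dD : down D.
  move=> y y' /= h le; apply: le_trans h; apply: le_measure; rewrite ?inE //.
  by move=> z /= h'; exact: le_trans h' le.
have hD := @core (P p) D a0 dD (fun y Dy => Dy).
have mD := @down_meas D dD.
have sub : ~` D `<=` [set x | modif H theta P A B alpha Uu x (theta p)].
  move=> x /= nD; apply: sub_hullc; have [At tB] := hAB p Hp; split => //.
  split => //; rewrite ltNge; apply/negP => h; apply: nD; apply: le_trans h.
  by apply: ereal_sup_ubound; exists p => //; split.
have hle : P p (~` D) <= P p [set x | modif H theta P A B alpha Uu x (theta p)]
  := @le_measure _ _ _ (P p) _ _ (mem_set (measurableC mD))
  (mem_set (up_meas _ (S0_up p))) sub.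
apply: le_trans hle; rewrite probability_setC //.
have [r [Er _]] := @prob_real (P p) D mD.
rewrite Er in hD *; rewrite lee_fin in hD.
by rewrite -EFinB lee_fin lerB.
Qed.

Lemma ub_meas : measurable_fun setT (modif_ub H theta P A B alpha Uu).
Proof.
apply: (measurability _ (ErealGenOInfty.measurableE R)) => // _ [_ [x ->] <-].
rewrite setTI; apply: up_meas => y y' /=; rewrite !in_itv /= !andbT => h le.
exact: lt_le_trans h (@modif_ub_resp Uu resp_refl _ _ le).
Qed.

Lemma exact_ub : (0 <= alpha)%R ->
  (forall p, H p -> A <= (theta p)%:E /\ (theta p)%:E <= B) ->
  exact_upper H theta P A alpha (modif_ub H theta P A B alpha Uu).
Proof.
move=> a0 hAB; apply: le_ereal_inf_tmp => _ [p Hp <-].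
apply: le_trans (cover p a0 hAB Hp) _.
apply: le_measure; rewrite ?inE.
- exact: up_meas _ (S0_up p).
- apply: up_meas => y y' [Ay hy] le; split => //.
  exact: le_trans hy (@modif_ub_resp Uu resp_refl _ _ le).
- move=> x /= mx; have [At _] := hAB p Hp; split => //.
  by apply: ereal_sup_ubound; exists (theta p).
Qed.

Lemma minimal U : class_u H theta P A alpha Uu U ->
  forall x, modif_ub H theta P A B alpha Uu x <= U x.
Proof.
move=> [_ [ex rU]] x; apply: ge_ereal_sup => _ [t mt <-].
suff : modif H theta P A B alpha Uu x `<=` [set t | t%:E <= U x] by apply.
apply: hullc_le => t0 [At [tB hlt]] /=.
rewrite leNgt; apply/negP => Ult.
have [_ [p [Hp tp] <-] aP] := ereal_sup_gt hlt.
set E := [set y | upper_int A U y (theta p)].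
have mE : measurable E.
  apply: up_meas => y y' [Ay hy] le; split => //.
  exact: le_trans hy (rU _ _ le).
have mG : measurable [set z | Uu z <= Uu x].
  by apply: down_meas; exact: resp_down resp_refl.
have sub : E `<=` ~` [set z | Uu z <= Uu x].
  move=> y [_ hy] /= le; have := le_trans hy (rU _ _ le).
  rewrite leNgt => /negP; apply; apply: lt_le_trans Ult _; by rewrite lee_fin.
have h1 : (1 - alpha)%:E <= P p E.
  by apply: le_trans ex _; apply: ereal_inf_lbound; exists p.
have h2 : P p E <= P p (~` [set z | Uu z <= Uu x])
  := @le_measure _ _ _ (P p) _ _ (mem_set mE) (mem_set (measurableC mG)) sub.
rewrite probability_setC // in h2.
have [r [Er _]] := @prob_real (P p) _ mG.
rewrite Er in aP h2; rewrite lte_fin in aP.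
have := le_trans h1 h2; rewrite -EFinB lee_fin; lra.
Qed.

End Aux.

Theorem theorem5 (d : measure_display) (T : measurableType d) (R : realType)
  (Par : Type) (H : set Par) (theta : Par -> R) (P : Par -> probability T R)
  (A B : \bar R) (alpha : R) (Uu : T -> \bar R) :
  0 <= alpha <= 1 ->
  (forall p, H p -> (A <= (theta p)%:E)%E /\ ((theta p)%:E <= B)%E) ->
  measurable_fun setT Uu ->
  (* (i) C_u^M is of level 1 - alpha *)
  ((1 - alpha)%:E <=
     ereal_inf [set P p [set x | modif H theta P A B alpha Uu x (theta p)] | p in H])%E
  /\
  (* (ii) C_u^{M oo} = C_u^M, where C_u^{M(k+1)} = modif of [A, U_u^{Mk}] *)
  (forall x, \bigcap_(k in [set: nat])
       modif H theta P A B alpha (modif_iter H theta P A B alpha Uu k) x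
     = modif H theta P A B alpha Uu x)
  /\
  (* (iii) [A, U_u^M] belongs to the class C_u and is the smallest in it *)
  (class_u H theta P A alpha Uu (modif_ub H theta P A B alpha Uu) /\
   forall U : T -> \bar R, class_u H theta P A alpha Uu U ->
     forall x, (modif_ub H theta P A B alpha Uu x <= U x)%E).
Proof.
move=> /andP[a0 a1] hAB mUu; split; [|split].
- apply: le_ereal_inf_tmp => _ [p Hp <-]; exact: cover.
- move=> x; apply/seteqP; split.
  + by move=> t ht; exact: (ht 0%N I).
  + move=> t ht k _; apply: modif_mono ht => t0.
    apply: hfun_mono; [exact: mUu|exact: resp_refl|exact: resp_iter|].
    by move=> y /= h; exact: resp_iter h.
- split; last by move=> U hU x; exact: minimal.
  split; first exact: ub_meas.
  split; first exact: exact_ub.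
  exact: modif_ub_resp (@resp_refl _ _ _ Uu).
Qed.
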